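(* Let $(B,\lfloor\cdot,\cdot\rfloor,\|\cdot\|)$ be an SSDB space with quadratic form $q$ and let $g_0(b)=\frac12\|b\|^2$. Then $\{x\in B: g_0(x)=q(x)\}+\{x\in B: g_0(x)=-q(x)\}=B.$
   Context: An SSD space is a pair $(B,\lfloor\cdot,\cdot\rfloor)$ with $B$ a nonzero real vector space and $\lfloor\cdot,\cdot\rfloor$ a symmetric bilinear form; $q(b)=\frac12\lfloor b,b\rfloor$. An SSDB space is a triple $(B,\lfloor\cdot,\cdot\rfloor,\|\cdot\|)$ such that $(B,\lfloor\cdot,\cdot\rfloor)$ is an SSD space, $(B,\|\cdot\|)$ is a Banach space, and the map $i:B\to B^*$, $i(b)=\lfloor\cdot,b\rfloor$, is a surjective isometry onto the dual $B^*$. *)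

(* Defs.v *)
From HB Require Import structures.
From mathcomp Require Import all_boot all_order all_algebra.
From mathcomp Require Import all_classical all_reals all_analysis.
Set Implicit Arguments. Unset Strict Implicit. Unset Printing Implicit Defensive.
Import Order.TTheory GRing.Theory Num.Theory.
Import numFieldNormedType.Exports.
Local Open Scope ring_scope.
Local Open Scope classical_set_scope.

Definition is_SSD (R : realType) (B : completeNormedModType R)
  (bf : B -> B -> R) : Prop :=
  (forall a b, bf a b = bf b a) /\
  (forall a1 a2 b, bf (a1 + a2) b = bf a1 b + bf a2 b) /\
  (forall (r : R) a b, bf (r *: a) b = r * bf a b).

Definition dual_norm (R : realType) (B : completeNormedModType R)
  (f : B -> R) : R :=
  sup [set r : R | exists x : B, `|x| <= 1 /\ r = `|f x|].

Definition is_linear_functional (R : realType) (B : completeNormedModType R)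
  (f : B -> R) : Prop :=
  (forall x y, f (x + y) = f x + f y) /\ (forall (r : R) x, f (r *: x) = r * f x).

(* SSDB space: B nonzero, bf an SSD form, and i : b |-> bf(.,b) is a
   surjective isometry from B onto its (topological) dual B^*. *)
Definition is_SSDB (R : realType) (B : completeNormedModType R)
  (bf : B -> B -> R) : Prop :=
  (exists b : B, b != 0) /\
  is_SSD bf /\
  (forall b : B, continuous (fun x => bf x b)) /\
  (forall b : B, dual_norm (fun x => bf x b) = `|b|) /\
  (forall f : B -> R, is_linear_functional f -> continuous f ->
     exists b : B, forall x, f x = bf x b).

Definition qform (R : realType) (B : completeNormedModType R)
  (bf : B -> B -> R) (b : B) : R := bf b b / 2.

Definition g0 (R : realType) (B : completeNormedModType R) (b : B) : R :=
  `|b| ^+ 2 / 2.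

(* Main.v *)
Require Import Defs.
From HB Require Import structures.
From mathcomp Require Import all_boot all_order all_algebra.
From mathcomp Require Import all_classical all_reals all_analysis.
From mathcomp Require Import ring lra.
Import Order.TTheory GRing.Theory Num.Theory.
Import numFieldNormedType.Exports.
Local Open Scope ring_scope.
Local Open Scope classical_set_scope.

Section HBext.
Variables (R : realType) (V : lmodType R) (F : V -> R).
Hypothesis Fconv : forall (l : R) x y, 0 <= l -> l <= 1 ->
  F (l *: x + (1 - l) *: y) <= l * F x + (1 - l) * F y.
Variables (M : set V) (l0 : V -> R).
Hypothesis M0 : M 0.
Hypothesis l0F : forall x, M x -> l0 x <= F x.
Hypothesis l0D : forall x y, M x -> M y -> M (x + y) /\ l0 (x + y) = l0 x + l0 y.
Hypothesis l0Z : forall (c : R) x, M x -> M (c *: x) /\ l0 (c *: x) = c * l0 x.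

Definition goodG (G : set (V * R)) :=
  [/\ (forall x r s, G (x, r) -> G (x, s) -> r = s),
      (forall x y r s, G (x, r) -> G (y, s) -> G (x + y, r + s)),
      (forall (c : R) x r, G (x, r) -> G (c *: x, c * r)),
      (forall x r, G (x, r) -> r <= F x) &
      (forall x, M x -> G (x, l0 x))].

Let PG := fun G : set (V * R) => G = set0 \/ goodG G.

Lemma good_chain (Fam : set (set (V * R))) :
  Fam `<=` PG -> total_on Fam subset -> PG (\bigcup_(X in Fam) X).
Proof.
move=> FP Ftot.
case: (pselect (exists G, Fam G /\ goodG G)) => [[G0 [FG0 gG0]]|nog]; last first.
  left; apply/seteqP; split => // p [G FG Gp].
  have [G0e|gG] := FP G FG; first by rewrite G0e in Gp.
  by exfalso; apply: nog; exists G.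
have one : forall G p, Fam G -> G p -> goodG G.
  move=> G p FG Gp; have [G0e|//] := FP G FG; by rewrite G0e in Gp.
have two : forall p q, (\bigcup_(X in Fam) X) p -> (\bigcup_(X in Fam) X) q ->
   exists G, [/\ Fam G, goodG G, G p & G q].
  move=> p q [G1 F1 p1] [G2 F2 q2].
  have [s12|s21] := Ftot _ _ F1 F2.
    by exists G2; split => //; [exact: (one _ q) | exact: s12].
  by exists G1; split => //; [exact: (one _ p) | exact: s21].
right; split.
- move=> x r s h1 h2; have [G [_ [Gf _ _ _ _] Gp Gq]] := two _ _ h1 h2.
  exact: Gf Gp Gq.
- move=> x y r s h1 h2; have [G [FG [_ Ga _ _ _] Gp Gq]] := two _ _ h1 h2.
  by exists G => //; exact: Ga.
- move=> c x r h1; have [G [FG [_ _ Gs _ _] Gp _]] := two _ _ h1 h1.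
  by exists G => //; exact: Gs.
- move=> x r h1; have [G [FG [_ _ _ Gd _] Gp _]] := two _ _ h1 h1.
  exact: Gd.
- move=> x Mx; exists G0 => //; by case: gG0 => _ _ _ _; apply.
Qed.

Lemma HB_convex : exists L : V -> R,
  [/\ forall x y, L (x + y) = L x + L y,
      forall (c : R) x, L (c *: x) = c * L x,
      forall x, L x <= F x &
      forall x, M x -> L x = l0 x].
Proof.
have [A [PA Amax]] := Zorn_bigcup good_chain.
pose G0 := [set p : V * R | M p.1 /\ p.2 = l0 p.1].
have gG0 : goodG G0.
  split.
  - by move=> x r s [_ /= ->] [_ /= ->].
  - move=> x y r s [/= Mx ->] [/= My ->] /=; have [h1 h2] := l0D _ _ Mx My; by split => //=; rewrite h2.
  - move=> c x r [/= Mx ->] /=; have [h1 h2] := l0Z c _ Mx; by split => //=; rewrite h2.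
  - by move=> x r [/= Mx ->]; exact: l0F.
  - by move=> x Mx.
have gA : goodG A.
  case: PA => // A0; exfalso; apply: (Amax G0); last by right.
  rewrite A0; split => // /(_ (0, l0 0)); apply => //.
case: gA => Afun Aadd Ascal Adom AM.
have A00 : A (0, 0).
  by have := Ascal 0 _ _ (AM _ M0); rewrite scale0r mul0r.
have tot : forall z, exists r, A (z, r).
  move=> z; apply: contrapT => nz.
  have key : forall m r m' r' s t, A (m, r) -> A (m', r') -> 0 < s -> 0 < t ->
     (r' - F (m' - s *: z)) / s <= (F (m + t *: z) - r) / t.
    move=> m r m' r' s t Amr Amr' s0 t0.
    pose l := t / (s + t).
    have st0 : 0 < s + t by rewrite addr_gt0.
    have l0' : 0 <= l by rewrite /l divr_ge0 // ltW.
    have l1 : l <= 1 by rewrite /l ler_pdivrMr // mul1r lerDr ltW.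
    have := @Fconv l (m' - s *: z) (m + t *: z) l0' l1.
    have hls : l * s = (1 - l) * t.
      rewrite /l; field; by rewrite lt0r_neq0.
    have eqv : l *: (m' - s *: z) + (1 - l) *: (m + t *: z) = l *: m' + (1 - l) *: m.
      rewrite scalerBr scalerDr !scalerA hls.
      by rewrite -!addrA; congr (_ + _); rewrite (addrC (_ *: m)) addKr.
    rewrite eqv.
    have Ap := Aadd _ _ _ _ (Ascal l _ _ Amr') (Ascal (1 - l) _ _ Amr).
    have H1 := Adom _ _ Ap.
    move=> H2; have H := le_trans H1 H2.
    have e1 : l * r' + (1 - l) * r = (t * r' + s * r) / (s + t).
      rewrite /l; field; by rewrite lt0r_neq0.
    have e2 : l * F (m' - s *: z) + (1 - l) * F (m + t *: z) =
      (t * F (m' - s *: z) + s * F (m + t *: z)) / (s + t).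
      rewrite /l; field; by rewrite lt0r_neq0.
    rewrite e1 e2 ler_pM2r ?invr_gt0 // in H.
    rewrite ler_pdivrMr // mulrAC ler_pdivlMr //.
    nra.
  pose Lset := [set v | exists m r s, [/\ A (m, r), 0 < s & v = (r - F (m - s *: z)) / s]].
  have Lne : Lset !=set0.
    by exists ((0 - F (0 - 1 *: z)) / 1), 0, 0, 1.
  have Lub : ubound Lset ((F (0 + 1 *: z) - 0) / 1).
    move=> v [m [r [s [Amr s0 ->]]]]; exact: key.
  have hsup : has_sup Lset by split => //; exists ((F (0 + 1 *: z) - 0) / 1).
  pose c := sup Lset.
  have hlow : forall m r s, A (m, r) -> 0 < s -> (r - F (m - s *: z)) / s <= c.
    move=> m r s Amr s0; apply: sup_upper_bound => //; by exists m, r, s.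
  have hup : forall m r t, A (m, r) -> 0 < t -> c <= (F (m + t *: z) - r) / t.
    move=> m r t Amr t0; apply: ge_sup => // v [m' [r' [s [Amr' s0 ->]]]].
    exact: key.
  have tuniq : forall m1 r1 t1 m2 r2 t2, A (m1, r1) -> A (m2, r2) ->
      m1 + t1 *: z = m2 + t2 *: z -> t1 = t2.
    move=> m1 r1 t1 m2 r2 t2 A1 A2 e; apply: contrapT => ne.
    apply: nz.
    have Ad := Ascal (t1 - t2)^-1 _ _ (Aadd _ _ _ _ A2 (Ascal (-1) _ _ A1)).
    eexists; suff <- : (t1 - t2)^-1 *: (m2 + (-1) *: m1) = z by exact: Ad.
    have -> : m2 + (-1) *: m1 = (t1 - t2) *: z.
      have -> : m2 = m1 + t1 *: z - t2 *: z by rewrite e addrK.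
      by rewrite scaleN1r scalerBl -addrA addrC subrKA addrC.
    by rewrite scalerA mulVf ?scale1r // subr_eq0; apply/eqP.
  pose A' := [set p : V * R | exists m r t, A (m, r) /\ p = (m + t *: z, r + t * c)].
  have gA' : goodG A'.
    split.
    - move=> x r s [m1 [r1 [t1 [A1 [e1 e1']]]]] [m2 [r2 [t2 [A2 [e2 e2']]]]].
      have et := tuniq _ _ _ _ _ _ A1 A2 (etrans (esym e1) e2).
      subst t2; have em : m1 = m2 by apply: (addIr (t1 *: z)); rewrite -e1 -e2.
      subst m2; have er := Afun _ _ _ A1 A2; by subst.
    - move=> x y r s [m1 [r1 [t1 [A1 [-> ->]]]]] [m2 [r2 [t2 [A2 [-> ->]]]]].
      exists (m1 + m2), (r1 + r2), (t1 + t2); split; first exact: Aadd.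
      by rewrite scalerDl mulrDl; congr (_, _); rewrite addrACA.
    - move=> d x r [m [r1 [t [A1 [-> ->]]]]].
      exists (d *: m), (d * r1), (d * t); split; first exact: Ascal.
      by rewrite scalerDr scalerA mulrDr mulrA.
    - move=> x r [m [r1 [t [A1 [-> ->]]]]].
      have [t0|t0|t0] := ltgtP t 0.
      + have s0 : 0 < - t by rewrite oppr_gt0.
        have := hlow _ _ _ A1 s0; rewrite scaleNr opprK ler_pdivrMr //.
        move=> h; nra.
      + have := hup _ _ _ A1 t0; rewrite ler_pdivlMr // => h; nra.
      + by rewrite t0 scale0r mul0r !addr0; exact: Adom.
    - move=> x Mx; exists x, (l0 x), 0; split; first exact: AM _ Mx.
      by rewrite scale0r mul0r !addr0.
  apply: (Amax A'); last by right.
  split.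
    move=> [x r] Axr; exists x, r, 0; split => //.
    by rewrite scale0r mul0r !addr0.
  move=> /(_ (z, c)) h; apply: nz; exists c; apply: h.
  by exists 0, 0, 1; split => //; rewrite scale1r mul1r !add0r.
have [L HL] := choice tot.
exists L; split.
- by move=> x y; apply: Afun (HL (x + y)) (Aadd _ _ _ _ (HL x) (HL y)).
- by move=> d x; apply: Afun (HL (d *: x)) (Ascal d _ _ (HL x)).
- by move=> x; apply: Adom (HL x).
- by move=> x Mx; apply: Afun (HL x) (AM _ Mx).
Qed.
End HBext.

Section Main.
Variables (R : realType) (B : completeNormedModType R) (bf : B -> B -> R).
Hypothesis bfC : forall a b, bf a b = bf b a.
Hypothesis bfDl : forall a1 a2 b, bf (a1 + a2) b = bf a1 b + bf a2 b.
Hypothesis bfZl : forall (r : R) a b, bf (r *: a) b = r * bf a b.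
Hypothesis dn : forall b, dual_norm (fun x => bf x b) = `|b|.
Hypothesis surj : forall f : B -> R, is_linear_functional f -> continuous f ->
     exists b : B, forall x, f x = bf x b.

Lemma bf0l b : bf 0 b = 0.
Proof. by have := bfZl 0 0 b; rewrite scale0r mul0r. Qed.
Lemma bfNl a b : bf (- a) b = - bf a b.
Proof. by rewrite -scaleN1r bfZl mulN1r. Qed.
Lemma bfBl a c b : bf (a - c) b = bf a b - bf c b.
Proof. by rewrite bfDl bfNl. Qed.
Lemma bfBr a c b : bf b (a - c) = bf b a - bf b c.
Proof. by rewrite bfC bfBl !(bfC b). Qed.

Lemma dn_hassup a : has_sup [set r : R | exists x : B, `|x| <= 1 /\ r = `|bf x a|].
Proof.
split; first by exists `|bf 0 a|, 0; rewrite normr0.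
apply: contrapT => nub.
have : dual_norm (fun x => bf x a) = 0.
  rewrite /dual_norm sup_out // => -[_ ?]; exact: nub.
rewrite dn => /normr0_eq0 a0.
apply: nub; exists 0 => r [x [_ ->]]; by rewrite a0 bfC bf0l normr0.
Qed.

Lemma bf_le a x : `|bf x a| <= `|x| * `|a|.
Proof.
have [->|x0] := eqVneq x 0; first by rewrite bf0l !normr0 mul0r.
have nx : 0 < `|x| by rewrite normr_gt0.
pose u := `|x|^-1 *: x.
have nu : `|u| = 1 by rewrite normrZ normfV normr_id mulVf // gt_eqF.
have : `|bf u a| <= `|a|.
  rewrite -dn; apply: sup_upper_bound (dn_hassup a) _ _; exists u; split => //.
  by rewrite nu.
rewrite /u bfZl normrM normfV normr_id => h.
have := ler_wpM2l (ltW nx) h; by rewrite mulrA mulfV ?gt_eqF // mul1r.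
Qed.

Lemma bf_approx a e : 0 < e -> exists x : B, `|x| <= 1 /\ `|a| - e < bf x a.
Proof.
move=> e0; have [v [x [x1 ->]] hv] := sup_adherent e0 (dn_hassup a).
rewrite -/(dual_norm (fun x => bf x a)) dn in hv.
have [h|h] := leP 0 (bf x a).
  by exists x; split => //; rewrite ger0_norm in hv.
by exists (- x); rewrite normrN bfNl; split => //; rewrite ltr0_norm in hv.
Qed.

Lemma q_le a : `|bf a a| <= `|a| ^+ 2.
Proof. by rewrite expr2 bf_le. Qed.

Lemma decomp b : exists x y : B,
    g0 x = qform bf x /\ g0 y = - qform bf y /\ b = x + y.
Proof.
pose phi a := `|a|^+2/2 + `|b - a|^+2/2 + bf b b/2 - bf b a.
have phiE a : phi a = (g0 a - qform bf a) + (g0 (b - a) + qform bf (b - a)).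
  rewrite /phi /g0 /qform bfBl !bfBr (bfC a b); lra.
have gq_ge a : 0 <= g0 a - qform bf a /\ 0 <= g0 a + qform bf a.
  have := q_le a; rewrite /g0 /qform ler_norml => /andP[h1 h2]; split; lra.
have phi_ge a : 0 <= phi a.
  by rewrite phiE; have [? ?] := gq_ge a; have [? ?] := gq_ge (b - a); lra.
pose F (p : B * B) := `|p.1|^+2/2 + `|b - p.2|^+2/2 + bf b b/2 - bf b p.2.
have sqconv : forall (l : R) (x y : B), 0 <= l -> l <= 1 ->
    `|l *: x + (1 - l) *: y|^+2 <= l * `|x|^+2 + (1 - l) * `|y|^+2.
  move=> l x y l0 l1.
  have h : `|l *: x + (1 - l) *: y| <= l * `|x| + (1 - l) * `|y|.
    apply: le_trans (ler_normD _ _) _; rewrite !normrZ !ger0_norm ?subr_ge0 //.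
  have hn := normr_ge0 (l *: x + (1 - l) *: y).
  have hx := normr_ge0 x; have hy := normr_ge0 y.
  have h2 : (l * `|x| + (1 - l) * `|y|)^+2 <= l * `|x|^+2 + (1 - l) * `|y|^+2.
    have : 0 <= l * (1 - l) * (`|x| - `|y|)^+2.
      by rewrite mulr_ge0 ?sqr_ge0 ?mulr_ge0 ?subr_ge0.
    rewrite !expr2 => h3; nra.
  apply: le_trans h2; rewrite !expr2; nra.
have Fconv : forall (l : R) (x y : B * B), 0 <= l -> l <= 1 ->
    F (l *: x + (1 - l) *: y) <= l * F x + (1 - l) * F y.
  move=> l [x1 x2] [y1 y2] l0 l1; rewrite /F /=.
  have e2 : b - (l *: x2 + (1 - l) *: y2) = l *: (b - x2) + (1 - l) *: (b - y2).
    rewrite !scalerBr addrACA -opprD -scalerDl.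
    by rewrite (_ : l + (1 - l) = 1) ?scale1r // addrCA subrr addr0.
  have e3 : bf b (l *: x2 + (1 - l) *: y2) = l * bf b x2 + (1 - l) * bf b y2.
    by rewrite bfC bfDl !bfZl (bfC x2) (bfC y2).
  rewrite e2 e3.
  have h1 := sqconv l x1 y1 l0 l1; have h2 := sqconv l (b - x2) (b - y2) l0 l1.
  nra.
pose M := [set p : B * B | p.1 = p.2].
have M0 : M 0 by [].
have l0F : forall x, M x -> (fun _ => 0) x <= F x.
  by move=> [x y]; rewrite /M /= => ->; exact: phi_ge.
have l0D : forall x y, M x -> M y -> M (x + y) /\ (fun _ : B * B => (0:R)) (x + y) = 0 + 0.
  by move=> [x1 x2] [y1 y2]; rewrite /M /= => -> ->; rewrite addr0.
have l0Z : forall (c : R) x, M x -> M (c *: x) /\ (fun _ : B * B => (0:R)) (c *: x) = c * 0.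
  by move=> c [x1 x2]; rewrite /M /= => ->; rewrite mulr0.
have [L [LD LZ LF LM]] := @HB_convex R [the lmodType R of (B * B)%type] F Fconv M (fun _ => 0) M0 l0F l0D l0Z.
pose l u := L (u, 0).
have lD : forall u v, l (u + v) = l u + l v.
  by move=> u v; rewrite /l -LD /=; congr L; congr (_, _); rewrite addr0.
have lZ : forall (c : R) u, l (c *: u) = c * l u.
  by move=> c u; rewrite /l -LZ; congr L; congr (_, _); rewrite /= scaler0.
have l0 : l 0 = 0 by have := lZ 0 0; rewrite scale0r mul0r.
have lN : forall u, l (- u) = - l u by move=> u; rewrite -scaleN1r lZ mulN1r.
have lB : forall u v, l (u - v) = l u - l v by move=> u v; rewrite lD lN.
have Lxy : forall x y, L (x, y) = l (x - y).
  move=> x y; have -> : (x, y) = (x - y, 0) + (y, y).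
    by congr (_, _); rewrite /= ?subrK ?add0r.
  by rewrite LD (LM (y, y)) // addr0.
have lF : forall u, l u <= `|u|^+2/2 + (`|b|^+2/2 + bf b b/2).
  move=> u; have := LF (u, 0); rewrite /F /= subr0 (bfC b 0) bf0l subr0.
  by rewrite -/(l u) addrA.
pose K := 1/2 + `|b|^+2/2 + `|bf b b|/2.
have K0 : 0 < K.
  by rewrite /K; have := normr_ge0 (bf b b); have := sqr_ge0 `|b|; lra.
have lK : forall u, `|l u| <= K * `|u|.
  move=> u; have [->|u0] := eqVneq u 0; first by rewrite l0 !normr0 mulr0.
  have nx : 0 < `|u| by rewrite normr_gt0.
  pose v := `|u|^-1 *: u.
  have nv : `|v| = 1 by rewrite normrZ normfV normr_id mulVf // gt_eqF.
  have hv1 := lF v; have hv2 := lF (- v).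
  rewrite normrN nv lN expr1n in hv2; rewrite nv expr1n in hv1.
  have hb1 := ler_norm (bf b b); have hb2 : - `|bf b b| <= bf b b.
    by rewrite lerNl -normrN ler_norm.
  have hv : `|l v| <= K by rewrite ler_norml /K; apply/andP; split; lra.
  have eu : l u = `|u| * l v by rewrite -lZ /v scalerA mulfV ?gt_eqF ?scale1r.
  rewrite eu normrM normr_id (mulrC K); apply: ler_wpM2l => //.
have lcont : continuous l.
  move=> x; apply/cvgrPdist_lt => e e0; near=> y.
  rewrite -lB (le_lt_trans (lK _)) // -ltr_pdivlMl //.
  near: y; apply: cvgr_dist_lt => //; by rewrite mulrC divr_gt0.
have [w hw] := @surj l (conj lD lZ) lcont.
have key : forall x y, l x - l y <= F (x, y).
  by move=> x y; rewrite -lB -Lxy; exact: LF.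
have phiw : phi w <= 0.
  pose S := `|w| + `|b - w|.
  have S0 : 0 <= S by rewrite addr_ge0.
  suff H : forall e, 0 < e -> phi w <= e * S.
    case: (leP (phi w) 0) => // hp.
    have S1 : 0 < S + 1 by lra.
    have := H (phi w / (S + 1)) (divr_gt0 hp S1).
    rewrite mulrAC ler_pdivlMr // => h'; nra.
  move=> e e0.
  have [x1 [nx1 hx1]] := bf_approx w e e0.
  have [x2 [nx2 hx2]] := bf_approx (b - w) e e0.
  have := key (`|w| *: x1) (b + `|b - w| *: x2).
  have eb : b - (b + `|b - w| *: x2) = - (`|b - w| *: x2).
    by rewrite opprD addrA subrr add0r.
  rewrite /F /= eb normrN !normrZ !normr_id !hw bfZl bfDl bfZl.
  rewrite (bfC b (b + _)) bfDl bfZl (bfC x2 b).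
  rewrite bfBr in hx2.
  have p1 : `|w| * (`|w| - e) <= `|w| * bf x1 w by rewrite ler_wpM2l // ltW.
  have p2 : `|b - w| * (`|b - w| - e) <= `|b - w| * (bf x2 b - bf x2 w).
    by rewrite ler_wpM2l // ltW.
  have p3 : (`|w| * `|x1|)^+2 <= `|w|^+2.
    by rewrite exprMn ler_piMr ?exprn_ge0 ?exprn_ile1.
  have p4 : (`|b - w| * `|x2|)^+2 <= `|b - w|^+2.
    by rewrite exprMn ler_piMr ?exprn_ge0 ?exprn_ile1.
  rewrite /phi /S (bfC b x2) => h; nra.
rewrite phiE in phiw.
have [h1 h2] := gq_ge w; have [h3 h4] := gq_ge (b - w).
exists w, (b - w); split; first lra.
split; first lra.
by rewrite addrC subrK.
Unshelve. all: by end_near.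
Qed.
End Main.

Theorem mainTheorem15 (R : realType) (B : completeNormedModType R)
  (bf : B -> B -> R) :
  is_SSDB bf ->
  forall b : B, exists x y : B,
    g0 x = qform bf x /\ g0 y = - qform bf y /\ b = x + y.
Proof.
move=> [_ [[bfC [bfDl bfZl]] [_ [dn surj]]]] b.
exact: (@decomp R B bf bfC bfDl bfZl dn surj b).
Qed.
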